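(* Let $W$ and $V$ be B-DMCs which are symmetric, symmetrized under the same permutation, and suppose that for a given $N=2^n$ ($n\ge0$) and $i\in\{1,\dots,N\}$: (A) $\mathbb P_V[L_{V_N^{(i)}}(y_1^N)<1]\ge\mathbb P_V[L_{V_N^{(i)}}(y_1^N)>1]$, (B) $Pe_N^{(i)}(W,V)-Pe_N^{(i)}(V)\le0$. Then (A) and (B) hold with $(N,i)$ replaced by $(2N,2i-1)$, and (A) holds with $(N,i)$ replaced by $(2N,2i)$. However, (B) need not hold for $(2N,2i)$: e.g. for $\mathcal Y=\{0,e,1\}$, $W$ the binary symmetric channel with crossover probability $0.3$ (with $W(e|x)=0$) and $V$ given by $V(0|0)=0.4, V(e|0)=0.5, V(1|0)=0.1$, $V(y|1)=V(\pi(y)|0)$ with $\pi$ swapping $0,1$ and fixing $e$ (so $L_V$ takes values $1/4,1,4$), conditions (A) and (B) hold for $N=1,i=1$ but (B) fails for $N=2,i=2$.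
   Context: A B-DMC $W:\{0,1\}\to\mathcal Y$ is given by transition probabilities $W(y|x)$, $\mathcal Y$ finite; $L_W(y)=W(y|1)/W(y|0)$. $W,V$ are ''symmetric, symmetrized under the same permutation'' if there is an involutive permutation $\pi$ of $\mathcal Y$ with $W(y|1)=W(\pi(y)|0)$, $V(y|1)=V(\pi(y)|0)$ for all $y$. For a B-DMC $W$: $W^-(y_1y_2|u_1)=\sum_{u_2}\tfrac12W(y_1|u_1\oplus u_2)W(y_2|u_2)$, $W^+(y_1y_2u_1|u_2)=\tfrac12W(y_1|u_1\oplus u_2)W(y_2|u_2)$. Synthetic channels: $W_1^{(1)}=W$, $W_{2N}^{(2i-1)}=(W_N^{(i)})^-$, $W_{2N}^{(2i)}=(W_N^{(i)})^+$; an output of $W_N^{(i)}$ is written $(y_1^N,u_1^{i-1})$ as in Arıkan's construction and $L_{V_N^{(i)}}(y_1^N):=L_{V_N^{(i)}}(y_1^N,0_1^{i-1})$. With $L_1=L_{V_N^{(i)}}(y_1^N)$, $L_2=L_{V_N^{(i)}}(y_{N+1}^{2N})$: $L_{V_{2N}^{(2i-1)}}=\frac{L_1+L_2}{1+L_1L_2}$, $L_{V_{2N}^{(2i)}}=L_1L_2$. Notation: $W(y_1^N|0_1^N)=\prod_jW(y_j|0)$, $\mathbb P_W[E]=\sum_{y_1^N}W(y_1^N|0_1^N)\mathbf 1\{E\}$, $\mathbf H(\ell)=\mathbf 1\{\ell>1\}+\tfrac12\mathbf 1\{\ell=1\}$. Mismatched error probability: $Pe_N^{(i)}(W,V)=\sum_{u}\tfrac12\sum_{(y_1^N,u_1^{i-1})}W_N^{(i)}(y_1^N,u_1^{i-1}|u)\big[\mathbf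 1\{V_N^{(i)}(\cdot|u\oplus1)>V_N^{(i)}(\cdot|u)\}+\tfrac12\mathbf 1\{V_N^{(i)}(\cdot|u\oplus1)=V_N^{(i)}(\cdot|u)\}\big]$, evaluated at the output $(y_1^N,u_1^{i-1})$; $Pe_N^{(i)}(V)=Pe_N^{(i)}(V,V)$. For such symmetric $W,V$ it is known that $Pe_N^{(i)}(W,V)=\sum_{y_1^N}W(y_1^N|0_1^N)\mathbf H(L_{V_N^{(i)}}(y_1^N))$. *)

(* Defs.v *)
From HB Require Import structures.
From mathcomp Require Import all_boot all_order all_algebra.
Set Implicit Arguments. Unset Strict Implicit. Unset Printing Implicit Defensive.
Import Order.TTheory GRing.Theory Num.Theory.
Local Open Scope ring_scope.

(* A B-DMC W : {0,1} -> Y with finite output alphabet Y; W y x = W(y|x),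
   the input bit 0 is [false], 1 is [true]. *)
Definition bdmc (R : realFieldType) (Y : finType) (W : Y -> bool -> R) : Prop :=
  (forall y x, 0 <= W y x) /\ (forall x, \sum_(y : Y) W y x = 1).

Definition sym_same (R : realFieldType) (Y : finType) (W V : Y -> bool -> R) : Prop :=
  exists pi : Y -> Y, (forall y, pi (pi y) = y) /\
    (forall y, W y true = W (pi y) false) /\ (forall y, V y true = V (pi y) false).

(* The index (N, i) with N = 2^n, 1 <= i <= N is encoded by the list of the
   n bits of i-1, least significant bit first.  Since
   W_{2N}^{(2i-1)} = (W_N^{(i)})^- and W_{2N}^{(2i)} = (W_N^{(i)})^+, the head
   bit says whether the last transform applied is "-" (false) or "+" (true). *)
Fixpoint bitsOf (n k : nat) : seq bool :=
  match n with
  | 0 => [::]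
  | n'.+1 => odd k :: bitsOf n' k./2
  end.
Definition idx (n i : nat) : seq bool := bitsOf n (i - 1).

(* Output alphabet of the synthetic channel: W^- has outputs (y1,y2),
   W^+ has outputs (y1,y2,u1). *)
Fixpoint outT (Y : finType) (s : seq bool) : finType :=
  match s with
  | [::] => Y
  | b :: s' => if b then Finite.clone ((outT Y s' * outT Y s') * bool)%type _
               else Finite.clone (outT Y s' * outT Y s')%type _
  end.

Fixpoint synth (R : realFieldType) (Y : finType) (W : Y -> bool -> R) (s : seq bool)
  : outT Y s -> bool -> R :=
  match s return outT Y s -> bool -> R with
  | [::] => W
  | b :: s' =>
    let Ws := @synth R Y W s' in
    if b as b' return outT Y (b' :: s') -> bool -> R then
      (fun o u2 => 2^-1 * Ws o.1.1 (o.2 (+) u2) * Ws o.1.2 u2)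
    else
      (fun o u1 => \sum_(u2 : bool) 2^-1 * Ws o.1 (u1 (+) u2) * Ws o.2 u2)
  end.

(* The output (y_1^N, 0_1^{i-1}) of W_N^{(i)}, with y_1^N given by
   j |-> y_{j+1} (j = 0..N-1).  Under the recursion the output of W_{2N}^{(.)}
   is built from (y_1^N, 0) and (y_{N+1}^{2N}, 0) (and u_1 = 0 for "+"),
   which is the all-zero u-history. *)
Fixpoint zeroOut (Y : finType) (s : seq bool) (y : nat -> Y) : outT Y s :=
  match s return outT Y s with
  | [::] => y 0%N
  | b :: s' =>
    let N := (2 ^ size s')%N in
    if b as b' return outT Y (b' :: s') then
      (@zeroOut Y s' y, @zeroOut Y s' (fun j => y (N + j)%N), false)
    else
      (@zeroOut Y s' y, @zeroOut Y s' (fun j => y (N + j)%N))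
  end.

Lemma pow2_gt0 (m : nat) : (0 < 2 ^ m)%N.
Proof. by rewrite expn_gt0. Qed.

Definition ffseq (Y : finType) (m : nat) (y : {ffun 'I_(2 ^ m) -> Y}) : nat -> Y :=
  fun j => y (insubd (Ordinal (pow2_gt0 m)) j).

(* L_{V_N^{(i)}}(y) < 1 and > 1, with L = V(.|1)/V(.|0) compared without
   division (L = +infinity when V(.|0) = 0 < V(.|1); 0/0 counts as 1). *)
Definition LV_lt1 (R : realFieldType) (Y : finType) (V : Y -> bool -> R) (s : seq bool)
  (o : outT Y s) : bool := @synth R Y V s o true < @synth R Y V s o false.
Definition LV_gt1 (R : realFieldType) (Y : finType) (V : Y -> bool -> R) (s : seq bool)
  (o : outT Y s) : bool := @synth R Y V s o false < @synth R Y V s o true.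

Definition ProbV (R : realFieldType) (Y : finType) (V : Y -> bool -> R) (s : seq bool)
  (E : outT Y s -> bool) : R :=
  \sum_(y : {ffun 'I_(2 ^ size s) -> Y})
     (\prod_(j < 2 ^ size s) V (y j) false) * (E (@zeroOut Y s (@ffseq Y (size s) y)))%:R.

Definition Hind (R : realFieldType) (a b : R) : R :=
  if b < a then 1 else if a == b then 2^-1 else 0.

Definition Pe (R : realFieldType) (Y : finType) (W V : Y -> bool -> R) (s : seq bool) : R :=
  \sum_(u : bool) 2^-1 * \sum_(o : outT Y s)
     @synth R Y W s o u * Hind (@synth R Y V s o (~~ u)) (@synth R Y V s o u).

Definition condA (R : realFieldType) (Y : finType) (V : Y -> bool -> R) (n i : nat) : Prop :=
  @ProbV R Y V (idx n i) (@LV_gt1 R Y V (idx n i)) <= @ProbV R Y V (idx n i) (@LV_lt1 R Y V (idx n i)).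
Definition condB (R : realFieldType) (Y : finType) (W V : Y -> bool -> R) (n i : nat) : Prop :=
  @Pe R Y W V (idx n i) - @Pe R Y V V (idx n i) <= 0.

(* The example: Y = {0, e, 1} encoded as 'I_3 with 0 |-> 0, e |-> 1, 1 |-> 2;
   pi = rev_ord swaps 0 and 1 and fixes e. *)
Definition exW0 (R : realFieldType) (y : 'I_3) : R :=
  match val y with 0 => 7%:R / 10%:R | 1 => 0 | _ => 3%:R / 10%:R end.
Definition exV0 (R : realFieldType) (y : 'I_3) : R :=
  match val y with 0 => 4%:R / 10%:R | 1 => 5%:R / 10%:R | _ => 1%:R / 10%:R end.
Definition exW (R : realFieldType) (y : 'I_3) (x : bool) : R :=
  if x then exW0 R (rev_ord y) else exW0 R y.
Definition exV (R : realFieldType) (y : 'I_3) (x : bool) : R :=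
  if x then exV0 R (rev_ord y) else exV0 R y.

(* Main.v *)
Require Import Defs.
From HB Require Import structures.
From mathcomp Require Import all_boot all_order all_algebra.
Import Order.TTheory GRing.Theory Num.Theory.
Local Open Scope ring_scope.
From mathcomp Require Import ring lra zify.
Set Implicit Arguments. Unset Strict Implicit.

Lemma sum_outF (R : realFieldType) (Y : finType) (s : seq bool) (F : outT Y (false :: s) -> R) :
  \sum_(o : outT Y (false :: s)) F o = \sum_(o1 : outT Y s) \sum_(o2 : outT Y s) F (o1, o2).
Proof.
have -> : \sum_(o : outT Y (false :: s)) F o = \sum_(o : (outT Y s * outT Y s)%type) F o by [].
rewrite pair_big. by apply: eq_bigr => -[].
Qed.
Lemma sum_outT (R : realFieldType) (Y : finType) (s : seq bool) (F : outT Y (true :: s) -> R) :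
  \sum_(o : outT Y (true :: s)) F o = \sum_(o1 : outT Y s) \sum_(o2 : outT Y s) \sum_(b : bool) F ((o1, o2), b).
Proof.
have -> : \sum_(o : outT Y (true :: s)) F o = \sum_(o : ((outT Y s * outT Y s) * bool)%type) F o by [].
rewrite (pair_big predT predT (fun o1 o2 => \sum_(b : bool) F (o1, o2, b))) /=.
rewrite (pair_big predT predT (fun p (b : bool) => F (p.1, p.2, b))) /=.
by apply: eq_bigr => -[[]].
Qed.

Fixpoint tau (Y : finType) (pi : Y -> Y) (s : seq bool) : outT Y s -> outT Y s :=
  match s return outT Y s -> outT Y s with
  | [::] => pi
  | b :: s' =>
    if b as b' return outT Y (b' :: s') -> outT Y (b' :: s') then
      (fun o => ((@tau Y pi s' o.1.1, @tau Y pi s' o.1.2), o.2))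
    else (fun o => (@tau Y pi s' o.1, o.2))
  end.
Arguments tau {Y} pi s.

Lemma tauK (Y : finType) (pi : Y -> Y) (hpi : forall y, pi (pi y) = y) s : involutive (tau pi s).
Proof.
elim: s => [|[] s IH] o /=; first exact: hpi.
  by case: o => [[o1 o2] b] /=; rewrite !IH.
by case: o => o1 o2 /=; rewrite IH.
Qed.

Lemma synth_ge0 (R : realFieldType) (Y : finType) (W : Y -> bool -> R)
  (h : forall y x, 0 <= W y x) s (o : outT Y s) u : 0 <= synth W o u.
Proof.
elim: s o u => [|[] s IH] o u /=; first exact: h.
  by rewrite !mulr_ge0 // invr_ge0 ler0n.
by apply: sumr_ge0 => u2 _; rewrite !mulr_ge0 // invr_ge0 ler0n.
Qed.

Lemma sum2_mul (R : comRingType) (I J : finType) c (F : I -> R) (G : J -> R) :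
  \sum_i \sum_j (c * F i * G j) = c * (\sum_i F i) * (\sum_j G j).
Proof.
rewrite -mulrA big_distrl mulr_sumr; apply: eq_bigr => i _.
by rewrite mulrA mulr_sumr.
Qed.

Lemma synth_sum1 (R : realFieldType) (Y : finType) (W : Y -> bool -> R)
  (hW : bdmc W) s u : \sum_(o : outT Y s) synth W o u = 1.
Proof.
elim: s u => [|[] s IH] u /=; first exact: hW.2.
  rewrite sum_outT /=.
  under eq_bigr do under eq_bigr do rewrite big_bool /=.
  under eq_bigr do rewrite big_split /=.
  rewrite big_split /= !sum2_mul !IH; lra.
rewrite sum_outF /=.
under eq_bigr do under eq_bigr do rewrite big_bool /=.
under eq_bigr do rewrite big_split /=.
rewrite big_split /= !sum2_mul !IH; lra.
Qed.

Lemma synth_tau (R : realFieldType) (Y : finType) (W : Y -> bool -> R) (pi : Y -> Y)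
  (hpi : forall y, pi (pi y) = y) (hs : forall y, W y true = W (pi y) false) s o u :
  synth W (tau pi s o) u = synth W o (~~ u).
Proof.
elim: s o u => [|[] s IH] o u /=.
- by case: u => /=; rewrite hs ?hpi.
- case: o => [[o1 o2] b] /=. rewrite !IH. by case: b; case: u.
- case: o => o1 o2 /=. rewrite !big_bool /= !IH. by case: u.
Qed.

Lemma HindG (R : realFieldType) (a b : R) : b < a -> Hind a b = 1.
Proof. by rewrite /Hind => ->. Qed.
Lemma HindE (R : realFieldType) (a b : R) : a = b -> Hind a b = 2^-1.
Proof. by move=> ->; rewrite /Hind ltxx eqxx. Qed.
Lemma HindL (R : realFieldType) (a b : R) : a < b -> Hind a b = 0.
Proof. by move=> h; rewrite /Hind ltNge (ltW h) /= lt_eqF. Qed.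
Lemma Hind_compl (R : realFieldType) (a b : R) : Hind a b = 1 - Hind b a.
Proof.
case: (ltrgtP a b) => h.
- rewrite HindL // HindG //; lra.
- rewrite HindG // HindL //; lra.
- rewrite h HindE //; lra.
Qed.
Lemma Hind_ge0 (R : realFieldType) (a b : R) : 0 <= Hind a b.
Proof. case: (ltrgtP a b) => h; [rewrite HindL // | rewrite HindG // | rewrite h HindE //]; lra. Qed.
Lemma Hind_le1 (R : realFieldType) (a b : R) : Hind a b <= 1.
Proof. case: (ltrgtP a b) => h; [rewrite HindL // | rewrite HindG // | rewrite h HindE //]; lra. Qed.

Definition hV (R : realFieldType) (Y : finType) (V : Y -> bool -> R) (s : seq bool) (o : outT Y s) : R :=
  Hind (synth V o true) (synth V o false).
Arguments hV {R Y} V {s} o.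

Lemma Pe_eq (R : realFieldType) (Y : finType) (W V : Y -> bool -> R) (pi : Y -> Y)
  (hpi : forall y, pi (pi y) = y) (hsW : forall y, W y true = W (pi y) false)
  (hsV : forall y, V y true = V (pi y) false) s :
  Pe W V s = \sum_(o : outT Y s) synth W o false * hV V o.
Proof.
rewrite /Pe big_bool /=.
have -> : \sum_(o : outT Y s) synth W o true * Hind (synth V o false) (synth V o true)
   = \sum_(o : outT Y s) synth W o false * hV V o.
  rewrite (reindex_inj (can_inj (@tauK _ _ hpi s))) /=.
  by apply: eq_bigr => o _; rewrite /hV !(synth_tau hpi).
rewrite /hV; lra.
Qed.

Lemma sum_true_h (R : realFieldType) (Y : finType) (W V : Y -> bool -> R) (pi : Y -> Y)
  (hpi : forall y, pi (pi y) = y) (hsW : forall y, W y true = W (pi y) false)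
  (hsV : forall y, V y true = V (pi y) false) (hW : bdmc W) s :
  \sum_(o : outT Y s) synth W o true * hV V o = 1 - \sum_(o : outT Y s) synth W o false * hV V o.
Proof.
rewrite (reindex_inj (can_inj (@tauK _ _ hpi s))) /=.
rewrite -(synth_sum1 hW s false) -sumrB.
by apply: eq_bigr => o _; rewrite /hV !(synth_tau hpi hsW) !(synth_tau hpi hsV) /= Hind_compl mulrBr mulr1.
Qed.

Lemma a_le_half (R : realFieldType) (Y : finType) (V : Y -> bool -> R) (pi : Y -> Y)
  (hpi : forall y, pi (pi y) = y) (hsV : forall y, V y true = V (pi y) false) (hV0 : bdmc V) s :
  \sum_(o : outT Y s) synth V o false * hV V o <= 2^-1.
Proof.
have h := sum_true_h hpi hsV hsV hV0 s.
suff : \sum_(o : outT Y s) synth V o false * hV V o <= \sum_(o : outT Y s) synth V o true * hV V o.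
  rewrite h; lra.
apply: ler_sum => o _; rewrite /hV.
case: (ltrgtP (synth V o true) (synth V o false)) => h1.
- by rewrite HindL // !mulr0.
- by rewrite HindG // !mulr1 ltW.
- by rewrite h1.
Qed.

Ltac hind_solve :=
  repeat match goal with |- context [Hind ?a ?b] =>
     first [ rewrite (@HindG _ a b); last by nra
           | rewrite (@HindL _ a b); last by nra
           | rewrite (@HindE _ a b); last by nra ] end.

Lemma Hind_minus (R : realFieldType) (x1 y1 x2 y2 : R) :
  0 <= x1 -> 0 <= y1 -> 0 <= x2 -> 0 <= y2 ->
  Hind (2^-1 * x1 * y2 + 2^-1 * y1 * x2) (2^-1 * y1 * y2 + 2^-1 * x1 * x2)
  = Hind y1 x1 + Hind y2 x2 - 2 * Hind y1 x1 * Hind y2 x2.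
Proof.
move=> *.
case: (ltrgtP y1 x1) => h1; case: (ltrgtP y2 x2) => h2;
  try (subst; rewrite (@HindE _ x1 x1) //); try (subst; rewrite (@HindE _ x2 x2) //);
  hind_solve; lra.
Qed.

Lemma sum2_prod (R : realFieldType) (I J : finType) (F : I -> R) (G : J -> R) :
  \sum_i \sum_j (F i * G j) = (\sum_i F i) * (\sum_j G j).
Proof. by rewrite mulr_suml; apply: eq_bigr => i _; rewrite mulr_sumr. Qed.

Lemma sum2_g (R : realFieldType) (I : finType) (F h : I -> R) :
  \sum_i \sum_j (F i * F j * (h i + h j - 2 * h i * h j))
  = 2 * ((\sum_i F i * h i) * (\sum_i F i)) - 2 * ((\sum_i F i * h i) * (\sum_i F i * h i)).
Proof.
transitivity (\sum_i \sum_j ((F i * h i) * F j + F i * (F j * h j) - (2 * (F i * h i)) * (F j * h j))).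
  by apply: eq_bigr => i _; apply: eq_bigr => j _; ring.
under eq_bigr do rewrite sumrB big_split /=.
rewrite sumrB big_split /= !sum2_prod -mulr_sumr.
ring.
Qed.

Lemma Pe_minus (R : realFieldType) (Y : finType) (W V : Y -> bool -> R) (pi : Y -> Y)
  (hpi : forall y, pi (pi y) = y) (hsW : forall y, W y true = W (pi y) false)
  (hsV : forall y, V y true = V (pi y) false) (hW : bdmc W) (hV0 : bdmc V) s :
  Pe W V (false :: s) = 2 * (\sum_(o : outT Y s) synth W o false * hV V o)
     - 2 * ((\sum_(o : outT Y s) synth W o false * hV V o) * (\sum_(o : outT Y s) synth W o false * hV V o)).
Proof.
rewrite (Pe_eq hpi hsW hsV (false :: s)) sum_outF.
pose g (o1 o2 : outT Y s) := hV V o1 + hV V o2 - 2 * hV V o1 * hV V o2.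
transitivity (\sum_(o1 : outT Y s) \sum_(o2 : outT Y s)
   (2^-1 * (synth W o1 false * synth W o2 false * g o1 o2)
    + 2^-1 * (synth W o1 true * synth W o2 true * g o1 o2))).
  apply: eq_bigr => o1 _; apply: eq_bigr => o2 _.
  rewrite /hV /= !big_bool /= Hind_minus ?(synth_ge0 hV0.1) //.
  rewrite /g /hV; ring.
under eq_bigr do rewrite big_split /= -!mulr_sumr.
rewrite big_split /= -!mulr_sumr /g !sum2_g.
rewrite !(synth_sum1 hW) (sum_true_h hpi hsW hsV hW).
by field.
Qed.

Lemma aW_ge0 (R : realFieldType) (Y : finType) (W V : Y -> bool -> R) (hW : bdmc W) s :
  0 <= \sum_(o : outT Y s) synth W o false * hV V o.
Proof. by apply: sumr_ge0 => o _; rewrite mulr_ge0 ?(synth_ge0 hW.1) // /hV Hind_ge0. Qed.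

Lemma condB_minus (R : realFieldType) (Y : finType) (W V : Y -> bool -> R) (pi : Y -> Y)
  (hpi : forall y, pi (pi y) = y) (hsW : forall y, W y true = W (pi y) false)
  (hsV : forall y, V y true = V (pi y) false) (hW : bdmc W) (hV0 : bdmc V) s :
  Pe W V s - Pe V V s <= 0 -> Pe W V (false :: s) - Pe V V (false :: s) <= 0.
Proof.
rewrite (Pe_minus hpi hsW hsV hW hV0) (Pe_minus hpi hsV hsV hV0 hV0).
rewrite (Pe_eq hpi hsW hsV) (Pe_eq hpi hsV hsV).
have h1 := a_le_half hpi hsV hV0 s.
have h2 := aW_ge0 V hW s.
move: h1 h2.
set a := \sum_(o : outT Y s) synth W o false * hV V o.
set b := \sum_(o : outT Y s) synth V o false * hV V o.
move=> h1 h2 h3; nra.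
Qed.

Definition Sm (R : realFieldType) (Y : finType) (V : Y -> bool -> R) (m : nat) (G : (nat -> Y) -> R) : R :=
  \sum_(y : {ffun 'I_(2 ^ m) -> Y}) (\prod_(j < 2 ^ m) V (y j) false) * G (ffseq y).

Definition catf (Y : Type) (m : nat) (y1 y2 : nat -> Y) : nat -> Y :=
  fun k => if (k < 2 ^ m)%N then y1 k else y2 (k - 2 ^ m)%N.

Lemma ffseq_lt (Y : finType) m (y : {ffun 'I_(2 ^ m) -> Y}) k (hk : (k < 2 ^ m)%N) :
  ffseq y k = y (Ordinal hk).
Proof. by rewrite /ffseq; congr (y _); apply: val_inj; rewrite val_insubd /= hk. Qed.
Lemma ffseq_ord (Y : finType) m (y : {ffun 'I_(2 ^ m) -> Y}) (j : 'I_(2 ^ m)) : ffseq y j = y j.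
Proof. rewrite (ffseq_lt y (ltn_ord j)); congr (y _); exact: val_inj. Qed.

Lemma pow2S m : (2 ^ m.+1 = 2 ^ m + 2 ^ m)%N. Proof. by rewrite expnS mul2n addnn. Qed.

Definition joinf (Y : finType) m (p : {ffun 'I_(2 ^ m) -> Y} * {ffun 'I_(2 ^ m) -> Y}) :
  {ffun 'I_(2 ^ m.+1) -> Y} :=
  [ffun j : 'I_(2 ^ m.+1) => catf m (ffseq p.1) (ffseq p.2) j].
Definition splitf (Y : finType) m (y : {ffun 'I_(2 ^ m.+1) -> Y}) :
  {ffun 'I_(2 ^ m) -> Y} * {ffun 'I_(2 ^ m) -> Y} :=
  ([ffun j : 'I_(2 ^ m) => ffseq y j], [ffun j : 'I_(2 ^ m) => ffseq y (2 ^ m + j)]).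

Lemma ffseq_join (Y : finType) m p k : (k < 2 ^ m.+1)%N ->
  ffseq (@joinf Y m p) k = catf m (ffseq p.1) (ffseq p.2) k.
Proof. by move=> hk; rewrite (ffseq_lt _ hk) ffunE. Qed.

Lemma joinK (Y : finType) m : cancel (@joinf Y m) (@splitf Y m).
Proof.
case=> y1 y2; rewrite /splitf; congr pair; apply/ffunP => j; rewrite ffunE /=.
- have hj : (j < 2 ^ m.+1)%N by rewrite pow2S ltn_addr.
  by rewrite ffseq_join //= /catf ltn_ord ffseq_ord.
- have hj : (2 ^ m + j < 2 ^ m.+1)%N by rewrite pow2S ltn_add2l.
  rewrite ffseq_join //= /catf ifN; last by rewrite -leqNgt leq_addr.
  by rewrite addKn ffseq_ord.
Qed.

Lemma splitK (Y : finType) m : cancel (@splitf Y m) (@joinf Y m).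
Proof.
move=> y; apply/ffunP => j; rewrite ffunE /catf /=.
case: ifP => hj.
- by rewrite (ffseq_lt _ hj) ffunE ffseq_ord.
- have hj2 : (2 ^ m <= j)%N by rewrite leqNgt hj.
  have hj' : (j - 2 ^ m < 2 ^ m)%N.
    have h := ltn_ord j; have e := pow2S m; lia.
  rewrite (ffseq_lt _ hj') ffunE /= subnKC //. by rewrite ffseq_ord.
Qed.

Lemma prod_join (R : realFieldType) (Y : finType) (V : Y -> bool -> R) m p :
  \prod_(j < 2 ^ m.+1) V (@joinf Y m p j) false
  = (\prod_(j < 2 ^ m) V (p.1 j) false) * (\prod_(j < 2 ^ m) V (p.2 j) false).
Proof.
under eq_bigr do rewrite ffunE.
rewrite -(big_mkord xpredT (fun k => V (catf m (ffseq p.1) (ffseq p.2) k) false)).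
rewrite pow2S (big_cat_nat (n := (2 ^ m)%N)) ?leq_addr //=.
congr (_ * _).
  rewrite big_mkord; apply: eq_bigr => j _; by rewrite /catf ltn_ord ffseq_ord.
rewrite -{1}[(2 ^ m)%N]add0n big_addn addnK big_mkord; apply: eq_bigr => j _.
rewrite /catf ifN; last by rewrite -leqNgt leq_addl.
by rewrite addnK ffseq_ord.
Qed.

Lemma Sm_split (R : realFieldType) (Y : finType) (V : Y -> bool -> R) m G :
  (forall y y', (forall k, (k < 2 ^ m.+1)%N -> y k = y' k) -> G y = G y') ->
  Sm V m.+1 G = Sm V m (fun y1 => Sm V m (fun y2 => G (catf m y1 y2))).
Proof.
move=> hG; rewrite /Sm.
rewrite (reindex (@joinf Y m)); last first.
  by apply: onW_bij; exists (@splitf Y m); [exact: joinK | exact: splitK].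
under [RHS]eq_bigr do rewrite mulr_sumr.
rewrite pair_big /=.
apply: eq_bigr => -[y1 y2] _ /=.
rewrite prod_join -mulrA; congr (_ * (_ * _)).
by apply: hG => k hk; rewrite ffseq_join.
Qed.

Lemma zeroOut_ext (Y : finType) s (y y' : nat -> Y) :
  (forall k, (k < 2 ^ size s)%N -> y k = y' k) -> zeroOut s y = zeroOut s y'.
Proof.
elim: s y y' => [|b s IH] y y' h /=; first by apply: h; rewrite expn0.
have h1 : zeroOut s y = zeroOut s y'.
  by apply: IH => k hk; apply: h; rewrite /= pow2S ltn_addr.
have h2 : zeroOut s (fun j => y (2 ^ size s + j)%N) = zeroOut s (fun j => y' (2 ^ size s + j)%N).
  by apply: IH => k hk; apply: h; rewrite /= pow2S ltn_add2l.
clear h; by case: b; rewrite h1 h2.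
Qed.

Definition EV (R : realFieldType) (Y : finType) (V : Y -> bool -> R) (s : seq bool) (F : outT Y s -> R) : R :=
  Sm V (size s) (fun y => F (zeroOut s y)).
Arguments EV {R Y} V s F.

Definition build (Y : finType) (b : bool) (s : seq bool) (o1 o2 : outT Y s) : outT Y (b :: s) :=
  if b as b' return outT Y (b' :: s) then ((o1, o2), false) else (o1, o2).

Lemma EV_cons (R : realFieldType) (Y : finType) (V : Y -> bool -> R) b s F :
  EV V (b :: s) F = EV V s (fun o1 => EV V s (fun o2 => F (build b o1 o2))).
Proof.
rewrite /EV /= Sm_split; last first.
  by move=> y y' h; congr F; apply: zeroOut_ext.
rewrite /Sm; apply: eq_bigr => y1 _; congr (_ * _).
apply: eq_bigr => y2 _; congr (_ * _). congr F.
have e1 : zeroOut s (catf (size s) (ffseq y1) (ffseq y2)) = zeroOut s (ffseq y1).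
  by apply: zeroOut_ext => k hk; rewrite /catf hk.
have e2 : zeroOut s (fun j => catf (size s) (ffseq y1) (ffseq y2) (2 ^ size s + j)%N)
          = zeroOut s (ffseq y2).
  apply: zeroOut_ext => k hk; rewrite /catf ifN; last by rewrite -leqNgt leq_addr.
  by rewrite addKn.
by move: F; case: b => F /=; rewrite e1 e2.
Qed.

Lemma EV_ext (R : realFieldType) (Y : finType) (V : Y -> bool -> R) s (F G : outT Y s -> R) :
  (forall o, F o = G o) -> EV V s F = EV V s G.
Proof. by move=> h; rewrite /EV /Sm; apply: eq_bigr => y _; rewrite h. Qed.
Lemma EV_add (R : realFieldType) (Y : finType) (V : Y -> bool -> R) s (F G : outT Y s -> R) :
  EV V s (fun o => F o + G o) = EV V s F + EV V s G.
Proof. by rewrite /EV /Sm -big_split; apply: eq_bigr => y _; rewrite mulrDr. Qed.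
Lemma EV_scale (R : realFieldType) (Y : finType) (V : Y -> bool -> R) s c (F : outT Y s -> R) :
  EV V s (fun o => c * F o) = c * EV V s F.
Proof. by rewrite /EV /Sm mulr_sumr; apply: eq_bigr => y _; rewrite mulrCA. Qed.
Lemma EV0 (R : realFieldType) (Y : finType) (V : Y -> bool -> R) s :
  EV V s (fun _ => 0) = 0.
Proof. by rewrite /EV /Sm big1 // => y _; rewrite mulr0. Qed.
Lemma EV_le (R : realFieldType) (Y : finType) (V : Y -> bool -> R) (hV : forall y x, 0 <= V y x)
  s (F G : outT Y s -> R) : (forall o, F o <= G o) -> EV V s F <= EV V s G.
Proof.
move=> h; rewrite /EV /Sm; apply: ler_sum => y _; apply: ler_wpM2l => //.
by apply: prodr_ge0 => j _.
Qed.
Lemma EV_swap (R : realFieldType) (Y : finType) (V : Y -> bool -> R) s (G : outT Y s -> outT Y s -> R) :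
  EV V s (fun o1 => EV V s (fun o2 => G o1 o2)) = EV V s (fun o2 => EV V s (fun o1 => G o1 o2)).
Proof.
rewrite /EV /Sm. under eq_bigr do rewrite mulr_sumr. under [RHS]eq_bigr do rewrite mulr_sumr.
rewrite exchange_big; apply: eq_bigr => y1 _; apply: eq_bigr => y2 _; by rewrite mulrCA.
Qed.
Lemma EV_base (R : realFieldType) (Y : finType) (V : Y -> bool -> R) (F : outT Y [::] -> R) :
  EV V [::] F = \sum_(x : Y) V x false * F x.
Proof.
rewrite /EV /Sm /=.
rewrite (reindex (fun x : Y => [ffun _ : 'I_(2 ^ 0) => x])); last first.
  apply: onW_bij; exists (fun y : {ffun 'I_(2 ^ 0) -> Y} => y (Ordinal (pow2_gt0 0))).
    by move=> x; rewrite ffunE.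
  move=> y; apply/ffunP => j; rewrite ffunE; congr (y _); apply: val_inj => /=.
  by case: j => [[|k] hk] //=; rewrite expn0 in hk.
apply: eq_bigr => x _.
rewrite /ffseq ffunE; congr (_ * _).
rewrite big_ord_recl big_ord0 ffunE mulr1 //.
Qed.

Definition PosP (R : realFieldType) (Y : finType) (V : Y -> bool -> R) (s : seq bool) : Prop :=
  forall F : outT Y s -> R, EV V s F = EV V s (fun o => if 0 < synth V o false then F o else 0).

Lemma EV2_pos (R : realFieldType) (Y : finType) (V : Y -> bool -> R) s (hP : PosP V s)
  (G : outT Y s -> outT Y s -> R) :
  EV V s (fun o1 => EV V s (fun o2 => G o1 o2)) =
  EV V s (fun o1 => EV V s (fun o2 => if (0 < synth V o1 false) && (0 < synth V o2 false) then G o1 o2 else 0)).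
Proof.
rewrite hP [RHS]hP; apply: EV_ext => o1; case: ifP => h1 //=.
all: by rewrite hP; apply: EV_ext => o2.
Qed.

Lemma EV2_eqpos (R : realFieldType) (Y : finType) (V : Y -> bool -> R) s (hP : PosP V s)
  (G G' : outT Y s -> outT Y s -> R) :
  (forall o1 o2, 0 < synth V o1 false -> 0 < synth V o2 false -> G o1 o2 = G' o1 o2) ->
  EV V s (fun o1 => EV V s (fun o2 => G o1 o2)) = EV V s (fun o1 => EV V s (fun o2 => G' o1 o2)).
Proof.
move=> h; rewrite EV2_pos // [RHS]EV2_pos //; apply: EV_ext => o1; apply: EV_ext => o2.
by case: ifP => // /andP [h1 h2]; rewrite h.
Qed.

Lemma EV_eqpos (R : realFieldType) (Y : finType) (V : Y -> bool -> R) s (hP : PosP V s)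
  (G G' : outT Y s -> R) :
  (forall o, 0 < synth V o false -> G o = G' o) -> EV V s G = EV V s G'.
Proof.
move=> h; rewrite hP [RHS]hP; apply: EV_ext => o.
by case: ifP => // h1; rewrite h.
Qed.

Lemma x_build_pos (R : realFieldType) (Y : finType) (V : Y -> bool -> R) (hV : forall y x, 0 <= V y x)
  b s (o1 o2 : outT Y s) : 0 < synth V o1 false -> 0 < synth V o2 false ->
  0 < synth V (build b o1 o2) false.
Proof.
move=> h1 h2; have p1 := mulr_gt0 h1 h2.
have p2 := mulr_ge0 (synth_ge0 hV o1 true) (synth_ge0 hV o2 true).
case: b => /=; last rewrite big_bool /=; nra.
Qed.

Lemma Pos_all (R : realFieldType) (Y : finType) (V : Y -> bool -> R) (hV : forall y x, 0 <= V y x) s :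
  PosP V s.
Proof.
elim: s => [|b s IH] F.
  rewrite !EV_base; apply: eq_bigr => x _ /=.
  case: ifP => // h; have := hV x false; rewrite le0r h orbF => /eqP ->; by rewrite !mul0r.
rewrite !EV_cons; apply: EV2_eqpos => // o1 o2 h1 h2.
by rewrite (x_build_pos hV b h1 h2).
Qed.

Definition lr (R : realFieldType) (Y : finType) (V : Y -> bool -> R) (s : seq bool) (o : outT Y s) : R :=
  synth V o true / synth V o false.
Arguments lr {R Y} V {s} o.

Lemma lr_ge0 (R : realFieldType) (Y : finType) (V : Y -> bool -> R) (hV : forall y x, 0 <= V y x)
  s (o : outT Y s) : 0 <= lr V o.
Proof. by rewrite /lr divr_ge0 // synth_ge0. Qed.

Definition SymP (R : realFieldType) (Y : finType) (V : Y -> bool -> R) (s : seq bool) : Prop :=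
  forall f : R -> R, EV V s (fun o => if 0 < lr V o then f (lr V o)^-1 else 0)
                     = EV V s (fun o => lr V o * f (lr V o)).

Definition D (R : realFieldType) (Y : finType) (V : Y -> bool -> R) (s : seq bool) (Phi : R -> R -> R) : R :=
  EV V s (fun o1 => EV V s (fun o2 => Phi (lr V o1) (lr V o2))).

Lemma D_ext (R : realFieldType) (Y : finType) (V : Y -> bool -> R) (hV : forall y x, 0 <= V y x) s
  (Phi Psi : R -> R -> R) : (forall x y, 0 <= x -> 0 <= y -> Phi x y = Psi x y) -> D V s Phi = D V s Psi.
Proof. by move=> h; apply: EV_ext => o1; apply: EV_ext => o2; rewrite h ?lr_ge0. Qed.

Lemma D_add (R : realFieldType) (Y : finType) (V : Y -> bool -> R) s (Phi Psi : R -> R -> R) :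
  D V s (fun x y => Phi x y + Psi x y) = D V s Phi + D V s Psi.
Proof. rewrite /D -EV_add; apply: EV_ext => o1; by rewrite EV_add. Qed.

Lemma D_S2 (R : realFieldType) (Y : finType) (V : Y -> bool -> R) s (hS : SymP V s) (Phi : R -> R -> R) :
  D V s (fun x y => if 0 < y then Phi x y^-1 else 0) = D V s (fun x y => y * Phi x y).
Proof. by apply: EV_ext => o1; exact: (hS (Phi (lr V o1))). Qed.

Lemma D_S1 (R : realFieldType) (Y : finType) (V : Y -> bool -> R) s (hS : SymP V s) (Phi : R -> R -> R) :
  D V s (fun x y => if 0 < x then Phi x^-1 y else 0) = D V s (fun x y => x * Phi x y).
Proof.
rewrite /D EV_swap [RHS]EV_swap; apply: EV_ext => o2.
exact: (hS (fun t => Phi t (lr V o2))).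
Qed.

Definition hf (R : realFieldType) (x y : R) : R := (x + y) / (1 + x * y).

Lemma hf_F1 (R : realFieldType) (x y : R) : 0 < x -> 0 <= y -> hf x^-1 y = (hf x y)^-1.
Proof.
move=> hx hy; rewrite /hf invf_div.
have h1 : x != 0 by rewrite gt_eqF.
have h2 : x + y != 0 by rewrite gt_eqF //; lra.
by field; rewrite h1 h2.
Qed.
Lemma hf_C (R : realFieldType) (x y : R) : hf x y = hf y x.
Proof. by rewrite /hf (addrC x y) (mulrC x y). Qed.
Lemma hf_F2 (R : realFieldType) (x y : R) : 0 <= x -> 0 < y -> hf x y^-1 = (hf x y)^-1.
Proof. by move=> hx hy; rewrite hf_C hf_F1 // hf_C. Qed.
Lemma hf_F3 (R : realFieldType) (x y : R) : 0 < x -> 0 < y -> hf x^-1 y^-1 = hf x y.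
Proof.
move=> hx hy; rewrite hf_F1 ?invr_ge0 ?ltW // hf_F2 ?ltW // invrK //.
Qed.
Lemma hf_F4 (R : realFieldType) (x y : R) : 0 <= x -> 0 <= y -> (1 + x * y) * hf x y = x + y.
Proof.
move=> hx hy; rewrite /hf.
have h3 : 1 + x * y != 0 by rewrite gt_eqF //; nra.
by rewrite mulrC divfK.
Qed.
Lemma hf0x (R : realFieldType) (y : R) : hf 0 y = y.
Proof. by rewrite /hf mul0r add0r addr0 invr1 mulr1. Qed.
Lemma hfx0 (R : realFieldType) (x : R) : hf x 0 = x.
Proof. by rewrite /hf mulr0 !addr0 invr1 mulr1. Qed.
Lemma hf_gt0 (R : realFieldType) (x y : R) : 0 < x -> 0 < y -> 0 < hf x y.
Proof. move=> hx hy; rewrite /hf divr_gt0 //; nra. Qed.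

Lemma lr_minus_alg (R : realFieldType) (x1 y1 x2 y2 : R) :
  0 < x1 -> 0 < x2 -> 0 <= y1 -> 0 <= y2 ->
  (2^-1 * x1 * y2 + 2^-1 * y1 * x2) / (2^-1 * y1 * y2 + 2^-1 * x1 * x2) = hf (y1 / x1) (y2 / x2).
Proof.
move=> h1 h2 h3 h4; rewrite /hf.
have n1 : x1 != 0 by rewrite gt_eqF.
have n2 : x2 != 0 by rewrite gt_eqF.
have n3 : (2^-1 * y1 * y2 + 2^-1 * x1 * x2) != 0 by rewrite gt_eqF //; nra.
have n4 : (x1 * x2 + y1 * y2) != 0 by rewrite gt_eqF //; nra.
have n5 : (y1 * y2 + x1 * x2) != 0 by rewrite gt_eqF //; nra.
by field; rewrite n1 n2 n4.
Qed.

Lemma lr_plus (R : realFieldType) (Y : finType) (V : Y -> bool -> R) s (o1 o2 : outT Y s) :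
  0 < synth V o1 false -> 0 < synth V o2 false ->
  lr V (build true o1 o2) = lr V o1 * lr V o2.
Proof.
move=> h1 h2; rewrite /lr /=.
have n1 : synth V o1 false != 0 by rewrite gt_eqF.
have n2 : synth V o2 false != 0 by rewrite gt_eqF.
by field; rewrite n1 n2.
Qed.

Lemma lr_minus (R : realFieldType) (Y : finType) (V : Y -> bool -> R) (hV : forall y x, 0 <= V y x)
  s (o1 o2 : outT Y s) :
  0 < synth V o1 false -> 0 < synth V o2 false ->
  lr V (build false o1 o2) = hf (lr V o1) (lr V o2).
Proof.
move=> h1 h2; rewrite /lr /= !big_bool /=.
by rewrite lr_minus_alg // synth_ge0.
Qed.

Lemma Sym_base (R : realFieldType) (Y : finType) (V : Y -> bool -> R) (pi : Y -> Y)
  (hpi : forall y, pi (pi y) = y) (hsV : forall y, V y true = V (pi y) false)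
  (hV : forall y x, 0 <= V y x) : SymP V [::].
Proof.
move=> f; rewrite !EV_base.
rewrite (reindex_inj (can_inj hpi)); apply: eq_bigr => x _.
rewrite /lr /=.
have e2 : V (pi x) true = V x false by rewrite hsV hpi.
rewrite -(hsV x) e2 invf_div.
have ha := hV x false; have hc := hV x true.
move: ha hc; set a := V x false; set c := V x true => ha hc.
rewrite le0r in ha; case/orP: ha => [/eqP -> | ha].
  by rewrite mul0r ltxx mulr0 mul0r.
rewrite le0r in hc; case/orP: hc => [/eqP -> | hc].
  by rewrite !mul0r mulr0.
rewrite divr_gt0 //.
by rewrite mulrA (mulrC a) divfK ?gt_eqF.
Qed.


Lemma D_S1' (R : realFieldType) (Y : finType) (V : Y -> bool -> R) (hV : forall y x, 0 <= V y x)
  s (hS : SymP V s) (Phi Psi : R -> R -> R) :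
  (forall x y, 0 <= x -> 0 <= y -> Psi x y = if 0 < x then Phi x^-1 y else 0) ->
  D V s Psi = D V s (fun x y => x * Phi x y).
Proof. by move=> h; rewrite (@D_ext _ _ _ hV s _ _ h) (D_S1 hS Phi). Qed.
Lemma D_S2' (R : realFieldType) (Y : finType) (V : Y -> bool -> R) (hV : forall y x, 0 <= V y x)
  s (hS : SymP V s) (Phi Psi : R -> R -> R) :
  (forall x y, 0 <= x -> 0 <= y -> Psi x y = if 0 < y then Phi x y^-1 else 0) ->
  D V s Psi = D V s (fun x y => y * Phi x y).
Proof. by move=> h; rewrite (@D_ext _ _ _ hV s _ _ h) (D_S2 hS Phi). Qed.

Lemma Sym_plus (R : realFieldType) (Y : finType) (V : Y -> bool -> R) (hV : forall y x, 0 <= V y x)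
  s (hP : PosP V s) (hS : SymP V s) : SymP V (true :: s).
Proof.
move=> f; rewrite !EV_cons.
transitivity (D V s (fun x y => if 0 < x * y then f (x * y)^-1 else 0)).
  by apply: EV2_eqpos => // o1 o2 h1 h2; rewrite lr_plus.
transitivity (D V s (fun x y => x * y * f (x * y))); last first.
  by apply: EV2_eqpos => // o1 o2 h1 h2; rewrite lr_plus.
rewrite (@D_S1' _ _ _ hV s hS (fun u v => if 0 < v then f (u * v^-1) else 0)); last first.
  move=> x y hx hy /=.
  rewrite le0r in hx; case/orP: hx => [/eqP -> | hx]; first by rewrite mul0r ltxx.
  rewrite hx pmulr_rgt0 //. by case: ifP => // _; rewrite invfM.
rewrite (@D_S2' _ _ _ hV s hS (fun u v => u * f (u * v))); last first.
  move=> x y hx hy /=. case: ifP => _ /=; last by rewrite mulr0. by [].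
by apply: D_ext => // x y _ _; rewrite mulrA (mulrC y x).
Qed.

Lemma Sym_minus (R : realFieldType) (Y : finType) (V : Y -> bool -> R) (hV : forall y x, 0 <= V y x)
  s (hP : PosP V s) (hS : SymP V s) : SymP V (false :: s).
Proof.
move=> f; rewrite !EV_cons.
transitivity (D V s (fun x y => if 0 < hf x y then f (hf x y)^-1 else 0)).
  by apply: EV2_eqpos => // o1 o2 h1 h2; rewrite lr_minus.
transitivity (D V s (fun x y => hf x y * f (hf x y))); last first.
  by apply: EV2_eqpos => // o1 o2 h1 h2; rewrite lr_minus.
pose A1 := fun x y : R => if x == 0 then (if 0 < y then f y^-1 else 0) else 0.
pose A2 := fun x y : R => if 0 < x then (if y == 0 then f x^-1 else 0) else 0.
pose A3 := fun x y : R => if 0 < x then (if 0 < y then f (hf x y)^-1 else 0) else 0.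
pose B1 := fun x y : R => if x == 0 then y * f y else 0.
pose B2 := fun x y : R => if 0 < x then (if y == 0 then x * f x else 0) else 0.
pose B3 := fun x y : R => if 0 < x then (if 0 < y then hf x y * f (hf x y) else 0) else 0.
rewrite (@D_ext _ _ _ hV s _ (fun x y => A1 x y + A2 x y + A3 x y)); last first.
  move=> x y hx hy; rewrite /A1 /A2 /A3.
  rewrite le0r in hx; case/orP: hx => [/eqP -> | hx].
    by rewrite hf0x eqxx ltxx /= !addr0.
  rewrite (gt_eqF hx) hx /= add0r.
  rewrite le0r in hy; case/orP: hy => [/eqP -> | hy].
    by rewrite hfx0 hx eqxx ltxx /= addr0.
  by rewrite (gt_eqF hy) hy hf_gt0 //= add0r.
rewrite [RHS](@D_ext _ _ _ hV s _ (fun x y => B1 x y + B2 x y + B3 x y)); last first.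
  move=> x y hx hy; rewrite /B1 /B2 /B3.
  rewrite le0r in hx; case/orP: hx => [/eqP -> | hx].
    by rewrite hf0x eqxx ltxx /= !addr0.
  rewrite (gt_eqF hx) hx /= add0r.
  rewrite le0r in hy; case/orP: hy => [/eqP -> | hy].
    by rewrite hfx0 eqxx ltxx /= addr0.
  by rewrite (gt_eqF hy) hy /= add0r.
rewrite !D_add.
have e1 : D V s A1 = D V s B1.
  rewrite (@D_S2' _ _ _ hV s hS (fun u v => if u == 0 then f v else 0)); last first.
    by move=> x y _ _; rewrite /A1 /=; case: (x == 0); case: (0 < y).
  apply: D_ext => // x y _ _ /=; rewrite /B1.
  by case: (x == 0); rewrite ?mulr0.
have e2 : D V s A2 = D V s B2.
  rewrite (@D_S1' _ _ _ hV s hS (fun u v => if v == 0 then f u else 0)); last first.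
    by move=> x y _ _.
  apply: D_ext => // x y hx _ /=; rewrite /B2.
  rewrite le0r in hx; case/orP: hx => [/eqP -> | hx]; first by rewrite mul0r ltxx.
  by rewrite hx; case: (y == 0); rewrite ?mulr0.
have X1 : D V s A3 = D V s (fun x y => x * (if 0 < y then f (hf x y) else 0)).
  rewrite (@D_S1' _ _ _ hV s hS (fun u v => if 0 < v then f (hf u v) else 0)) //.
    move=> x y hx hy; rewrite /A3 /=; case hx': (0 < x) => //.
    by rewrite hf_F1.
have X2 : D V s A3 = D V s (fun x y => y * (if 0 < x then f (hf x y) else 0)).
  rewrite (@D_S2' _ _ _ hV s hS (fun u v => if 0 < u then f (hf u v) else 0)) //.
    move=> x y hx hy; rewrite /A3 /=; case hx': (0 < x); case hy': (0 < y) => //=.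
    by rewrite hf_F2.
have X3 : D V s B3 = D V s (fun x y => y * (x * (hf x y * f (hf x y)))).
  rewrite (@D_S1' _ _ _ hV s hS (fun u v => if 0 < v then hf u v^-1 * f (hf u v^-1) else 0)); last first.
    move=> x y hx hy; rewrite /B3 /=; case hx': (0 < x); case hy': (0 < y) => //=.
    by rewrite hf_F3.
  rewrite (@D_S2' _ _ _ hV s hS (fun u v => u * (hf u v * f (hf u v)))) //.
    move=> x y hx hy /=; case hy': (0 < y) => /=; [by [] | by rewrite mulr0].
have X4 : D V s (fun x y => y * (x * (hf x y * f (hf x y)))) + D V s B3
   = D V s (fun x y => x * (if 0 < y then f (hf x y) else 0)) + D V s (fun x y => y * (if 0 < x then f (hf x y) else 0)).
  rewrite -!D_add; apply: D_ext => // x y hx hy; rewrite /B3.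
  rewrite le0r in hx; case/orP: hx => [/eqP -> | hx].
    by rewrite ltxx /= !(mul0r, mulr0, addr0, add0r).
  rewrite hx /=.
  rewrite le0r in hy; case/orP: hy => [/eqP -> | hy].
    by rewrite ltxx /= !(mul0r, mulr0, addr0, add0r).
  rewrite hy /=.
  have e := hf_F4 (ltW hx) (ltW hy).
  transitivity ((1 + x * y) * hf x y * f (hf x y)); first by ring.
  by rewrite e; ring.
have e3 : D V s A3 = D V s B3.
  move: X1 X2 X3 X4; lra.
by rewrite e1 e2 e3.
Qed.

Lemma Sym_all (R : realFieldType) (Y : finType) (V : Y -> bool -> R) (pi : Y -> Y)
  (hpi : forall y, pi (pi y) = y) (hsV : forall y, V y true = V (pi y) false)
  (hV : forall y x, 0 <= V y x) s : SymP V s.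
Proof.
elim: s => [|[] s IH]; first exact: Sym_base hpi hsV hV.
  by apply: (Sym_plus hV) => //; exact: (Pos_all hV).
by apply: (Sym_minus hV) => //; exact: (Pos_all hV).
Qed.

Lemma condA_EV (R : realFieldType) (Y : finType) (V : Y -> bool -> R) (pi : Y -> Y)
  (hpi : forall y, pi (pi y) = y) (hsV : forall y, V y true = V (pi y) false)
  (hV : forall y x, 0 <= V y x) s :
  EV V s (fun o => (LV_gt1 V o)%:R) <= EV V s (fun o => (LV_lt1 V o)%:R).
Proof.
have hP := @Pos_all R Y V hV s.
have hS := @Sym_all R Y V pi hpi hsV hV s.
pose f := fun t : R => if t < 1 then (1 : R) else 0.
have E1 : EV V s (fun o => (LV_gt1 V o)%:R) = EV V s (fun o => if 0 < lr V o then f (lr V o)^-1 else 0).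
  apply: EV_eqpos => // o h. rewrite /LV_gt1 /lr /f invf_div.
  have hy := synth_ge0 hV o true.
  rewrite le0r in hy; case/orP: hy => [/eqP -> | hy].
    by rewrite mul0r ltxx ltNge (ltW h) //=.
  by rewrite divr_gt0 // ltr_pdivrMr // mul1r; case: (_ < _).
rewrite E1 hS.
apply: (@le_trans _ _ (EV V s (fun o => f (lr V o)))).
  apply: EV_le => // o; rewrite /f; case: ifP => h; [by rewrite mulr1 ltW | by rewrite mulr0].
rewrite le_eqVlt; apply/orP; left; apply/eqP.
by apply: EV_eqpos => // o h; rewrite /f /lr /LV_lt1 ltr_pdivrMr // mul1r; case: (_ < _).
Qed.

Lemma condA_all (R : realFieldType) (Y : finType) (V : Y -> bool -> R) (pi : Y -> Y)
  (hpi : forall y, pi (pi y) = y) (hsV : forall y, V y true = V (pi y) false)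
  (hV : forall y x, 0 <= V y x) n i : condA V n i.
Proof. rewrite /condA; exact: (condA_EV hpi hsV hV). Qed.

Lemma idx_minus n i : (0 < i)%N -> idx n.+1 (2 * i - 1) = false :: idx n i.
Proof.
move=> hi; rewrite /idx /=.
have -> : (2 * i - 1 - 1 = 2 * (i - 1))%N by lia.
by rewrite mul2n odd_double doubleK.
Qed.

Lemma general_part (R : realFieldType) (Y : finType) (W V : Y -> bool -> R) :
     bdmc W -> bdmc V -> sym_same W V ->
     forall n i : nat, (0 < i <= 2 ^ n)%N ->
       condA V n i -> condB W V n i ->
       [/\ condA V n.+1 (2 * i - 1), condB W V n.+1 (2 * i - 1)
         & condA V n.+1 (2 * i)].
Proof.
move=> hW hV [pi [hpi [hsW hsV]]] n i /andP [hi _] hA hB.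
split; try exact: (condA_all hpi hsV hV.1).
rewrite /condB idx_minus //.
exact: (condB_minus hpi hsW hsV hW hV hB).
Qed.

Definition o0 : 'I_3 := @Ordinal 3 0 isT.
Definition o1 : 'I_3 := @Ordinal 3 1 isT.
Definition o2 : 'I_3 := @Ordinal 3 2 isT.

Lemma sum_I3 (R : realFieldType) (F : 'I_3 -> R) : \sum_(i : 'I_3) F i = F o0 + F o1 + F o2.
Proof.
rewrite !big_ord_recl big_ord0 addr0 addrA.
by congr (F _ + F _ + F _); apply: val_inj.
Qed.

Lemma eWo0f (R : realFieldType) : exW R o0 false = 7%:R / 10%:R. Proof. reflexivity. Qed.
Lemma eWo1f (R : realFieldType) : exW R o1 false = 0. Proof. reflexivity. Qed.
Lemma eWo2f (R : realFieldType) : exW R o2 false = 3%:R / 10%:R. Proof. reflexivity. Qed.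
Lemma eWo0t (R : realFieldType) : exW R o0 true = 3%:R / 10%:R. Proof. reflexivity. Qed.
Lemma eWo1t (R : realFieldType) : exW R o1 true = 0. Proof. reflexivity. Qed.
Lemma eWo2t (R : realFieldType) : exW R o2 true = 7%:R / 10%:R. Proof. reflexivity. Qed.
Lemma eVo0f (R : realFieldType) : exV R o0 false = 4%:R / 10%:R. Proof. reflexivity. Qed.
Lemma eVo1f (R : realFieldType) : exV R o1 false = 5%:R / 10%:R. Proof. reflexivity. Qed.
Lemma eVo2f (R : realFieldType) : exV R o2 false = 1%:R / 10%:R. Proof. reflexivity. Qed.
Lemma eVo0t (R : realFieldType) : exV R o0 true = 1%:R / 10%:R. Proof. reflexivity. Qed.
Lemma eVo1t (R : realFieldType) : exV R o1 true = 5%:R / 10%:R. Proof. reflexivity. Qed.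
Lemma eVo2t (R : realFieldType) : exV R o2 true = 4%:R / 10%:R. Proof. reflexivity. Qed.

Lemma ex_sym (R : realFieldType) : sym_same (exW R) (exV R).
Proof. exists (@rev_ord 3); split; [exact: rev_ordK | by split]. Qed.

Lemma ex_bdmcW (R : realFieldType) : bdmc (exW R).
Proof.
split.
  move=> y x; rewrite /exW /exW0; case: x; case: (val _) => [|[|k]] //=;
    by rewrite divr_ge0 ?ler0n.
by case; rewrite sum_I3 ?(eWo0f, eWo1f, eWo2f, eWo0t, eWo1t, eWo2t, eVo0f, eVo1f, eVo2f, eVo0t, eVo1t, eVo2t); lra.
Qed.
Lemma ex_bdmcV (R : realFieldType) : bdmc (exV R).
Proof.
split.
  move=> y x; rewrite /exV /exV0; case: x; case: (val _) => [|[|k]] //=;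
    by rewrite divr_ge0 ?ler0n.
by case; rewrite sum_I3 ?(eWo0f, eWo1f, eWo2f, eWo0t, eWo1t, eWo2t, eVo0f, eVo1f, eVo2f, eVo0t, eVo1t, eVo2t); lra.
Qed.

Lemma synth_nil (R : realFieldType) (Y : finType) (W : Y -> bool -> R) (o : outT Y [::]) u :
  synth (s := [::]) W o u = W o u.
Proof. reflexivity. Qed.

Lemma ex_condB0 (R : realFieldType) : condB (exW R) (exV R) 0 1.
Proof.
have hpi : forall y : 'I_3, rev_ord (rev_ord y) = y by move=> y; exact: rev_ordK.
rewrite /condB /idx /=.
rewrite !(@Pe_eq _ _ _ _ (@rev_ord 3) hpi) //.
rewrite /hV !sum_I3 !synth_nil ?(eWo0f, eWo1f, eWo2f, eWo0t, eWo1t, eWo2t, eVo0f, eVo1f, eVo2f, eVo0t, eVo1t, eVo2t).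
hind_solve; lra.
Qed.

Arguments exW : simpl never.
Arguments exV : simpl never.

Lemma ex_condB1 (R : realFieldType) : ~ condB (exW R) (exV R) 1 2.
Proof.
have hpi : forall y : 'I_3, rev_ord (rev_ord y) = y by move=> y; exact: rev_ordK.
rewrite /condB.
have -> : idx 1 2 = [:: true] by [].
rewrite !(@Pe_eq _ _ _ _ (@rev_ord 3) hpi) //.
rewrite !sum_outT /hV /=.
rewrite !sum_I3 !big_bool /= ?(eWo0f, eWo1f, eWo2f, eWo0t, eWo1t, eWo2t, eVo0f, eVo1f, eVo2f, eVo0t, eVo1t, eVo2t).
hind_solve.
move=> h; lra.
Qed.


Theorem theorem3 :
  (forall (R : realFieldType) (Y : finType) (W V : Y -> bool -> R),
     bdmc W -> bdmc V -> sym_same W V ->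
     forall n i : nat, (0 < i <= 2 ^ n)%N ->
       condA V n i -> condB W V n i ->
       [/\ condA V n.+1 (2 * i - 1), condB W V n.+1 (2 * i - 1)
         & condA V n.+1 (2 * i)])
  /\
  (forall R : realFieldType,
     [/\ bdmc (exW R), bdmc (exV R) & sym_same (exW R) (exV R)] /\
     [/\ condA (exV R) 0 1, condB (exW R) (exV R) 0 1
       & ~ condB (exW R) (exV R) 1 2]).
Proof.
split; first exact: general_part.
move=> R; split; first by split; [exact: ex_bdmcW | exact: ex_bdmcV | exact: ex_sym].
split; [| exact: ex_condB0 | exact: ex_condB1].
have [pi [hpi [_ hsV]]] := ex_sym R.
exact: (condA_all hpi hsV (ex_bdmcV R).1).
Qed.
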